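(* For any natural numbers $N,d \geq 1$ there are infinitely many primes not in $\mathcal S_{d,N}$.
   Context: For $N\ge1$ let $\Pi_N=\{\prod_{n=1}^N n^{k_n} : k_n\in\{0,1,2,\dots\}\}$; for $d\ge1$ let $\Sigma_{d,N}=\{m_1+\dots+m_d : m_i\in\Pi_N\}$ and $\mathcal S_{d,N}=\bigcup_{i=1}^d\Sigma_{i,N}$. *)

(* Defs.v *)
From mathcomp Require Import all_boot.
Set Implicit Arguments. Unset Strict Implicit. Unset Printing Implicit Defensive.

Definition in_Pi (N m : nat) : Prop :=
  exists k : nat -> nat, m = \prod_(1 <= n < N.+1) n ^ k n.

Definition in_Sigma (d N m : nat) : Prop :=
  exists f : 'I_d -> nat, (forall i, in_Pi N (f i)) /\ m = \sum_(i < d) f i.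

Definition in_S (d N m : nat) : Prop :=
  exists i, 1 <= i <= d /\ in_Sigma i N m.

(* Main.v *)
Require Import Defs.
From mathcomp Require Import all_boot zify.
Set Implicit Arguments. Unset Strict Implicit. Unset Printing Implicit Defensive.

Lemma bin_lb n : 2 ^ n <= 'C(n.*2, n).
Proof.
elim: n => [|n IH] //.
rewrite doubleS binS expnS mul2n -addnn.
have e : 'C(n.*2.+1, n.+1) = 'C(n.*2.+1, n).
  have -> : n.+1 = n.*2.+1 - n by rewrite -addnn; lia.
  by rewrite bin_sub // -addnn; lia.
rewrite e; have h : 2 ^ n <= 'C(n.*2.+1, n).
  by apply: (leq_trans IH); apply: leq_bin2l.
exact: leq_add.
Qed.

Lemma sum_ext p m A B : 1 < p -> (forall k, A <= k -> m < p ^ k) -> 1 <= A <= B ->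
  \sum_(1 <= k < B) m %/ p ^ k = \sum_(1 <= k < A) m %/ p ^ k.
Proof.
move=> p1 hk /andP[A1 AB].
rewrite (@big_cat_nat _ _ _ A 1 B _ _ A1 AB) /= [X in _ + X]big1_seq ?addn0 //.
move=> k /andP[_]; rewrite mem_index_iota => /andP[Ak _]; exact/divn_small/hk.
Qed.

Lemma logn_fact_T p m y : prime p -> m <= y ->
  logn p m`! = \sum_(1 <= k < (trunc_log p y).+1) m %/ p ^ k.
Proof.
move=> pp my; have p1 := prime_gt1 pp.
rewrite logn_fact //.
rewrite -(@sum_ext p m m.+1 (m.+1 + (trunc_log p y).+1)) //; last first.
- by apply/andP; split => //; apply: leq_addr.
- by move=> k mk; exact: leq_trans mk (ltnW (ltn_expl k p1)).
rewrite (@sum_ext p m (trunc_log p y).+1) //; last first.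
- by apply/andP; split => //; apply: leq_addl.
move=> k hk; apply: (leq_trans (n := y.+1)) => //.
apply: (leq_trans (trunc_log_ltn _ p1)); exact: leq_pexp2l (ltnW p1) hk.
Qed.

Lemma div2_le n q : 0 < q -> n.*2 %/ q <= n %/ q + n %/ q + 1.
Proof.
move=> q0; rewrite -ltnS ltn_divLR //.
have e := divn_eq n q; have r := ltn_pmod n q0.
set a := n %/ q in e *; set b := n %% q in e r *.
rewrite -addnn; nia.
Qed.

Lemma legendre_bin p n : prime p -> logn p 'C(n.*2, n) <= trunc_log p n.*2.
Proof.
move=> pp; have p1 := prime_gt1 pp.
have hf := bin_fact (leq_addl n n : n <= n + n).
rewrite addnK addnn in hf.
have := congr1 (logn p) hf.
have f0 := fact_gt0 n.
rewrite lognM ?muln_gt0 ?f0 ?bin_gt0 -?addnn ?leq_addl // lognM // addnn.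
have nn : n <= n.*2 by rewrite -addnn leq_addl.
rewrite (logn_fact_T pp (leqnn n.*2)) (logn_fact_T pp nn).
set T := trunc_log p n.*2.
have hs : \sum_(1 <= k < T.+1) n.*2 %/ p ^ k <=
  \sum_(1 <= k < T.+1) (n %/ p ^ k + n %/ p ^ k + 1).
  apply: leq_sum => k _; apply: div2_le; rewrite expn_gt0 (ltnW p1) //.
move: hs; rewrite !big_split /= sum_nat_const_nat.
move=> hs e. rewrite subSS subn0 muln1 in hs. lia.
Qed.

Lemma factor_bound p n : 0 < n ->
  p ^ logn p 'C(n.*2, n) <= (if prime p && (p <= n.*2) then n.*2 else 1).
Proof.
move=> n0; case pp: (prime p); last by rewrite lognE pp.
have p1 := prime_gt1 pp; have hl := legendre_bin n pp.
case: (leqP p n.*2) => pn /=.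
  apply: (leq_trans (leq_pexp2l (ltnW p1) hl)); apply: trunc_logP => //.
  by rewrite -addnn; lia.
have : trunc_log p n.*2 == 0 by rewrite trunc_log_eq0; apply/orP; right; lia.
move/eqP=> e; rewrite e leqn0 in hl; by rewrite (eqP hl).
Qed.

Lemma prod_if (s : seq nat) (a : pred nat) c :
  \prod_(p <- s) (if a p then c else 1) = c ^ count a s.
Proof.
elim: s => [|x s IH]; first by rewrite big_nil.
by rewrite big_cons IH /=; case: (a x); rewrite ?expnS ?add0n ?mul1n.
Qed.

Lemma cnt_le (s t : seq nat) (a : pred nat) : uniq s ->
  (forall p, p \in s -> a p -> p \in t) -> count a s <= size t.
Proof.
move=> us h; rewrite -size_filter; apply: uniq_leq_size; first exact: filter_uniq.
by move=> p; rewrite mem_filter => /andP[ap ps]; apply: h.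
Qed.

Definition piN x := count prime (iota 0 x.+1).

Lemma cheb n : 0 < n -> 2 ^ n <= (n.*2) ^ piN n.*2.
Proof.
move=> n0; apply: (leq_trans (bin_lb n)).
have C0 : 0 < 'C(n.*2, n) by rewrite bin_gt0 -addnn leq_addl.
rewrite -{1}(partnT C0) /partn.
rewrite (eq_bigl xpredT) //.
apply: (leq_trans (leq_prod (E2 := fun p => if prime p && (p <= n.*2) then n.*2 else 1) _)).
  by move=> p _; apply: factor_bound.
rewrite prod_if; apply: leq_pexp2l; first by rewrite -addnn; lia.
have -> : piN n.*2 = size (filter prime (iota 0 n.*2.+1)) by rewrite size_filter.
apply: cnt_le; first by rewrite /index_iota iota_uniq.
move=> p _ /andP[pp pn]; rewrite mem_filter pp mem_iota /=; lia.
Qed.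

Definition Fk N E (k : {ffun 'I_N -> 'I_E}) : nat := \prod_(i < N) (i.+1) ^ (k i).
Definition Gf d N E (g : {ffun 'I_d -> option {ffun 'I_N -> 'I_E}}) : nat :=
  \sum_(t < d) (if g t is Some k then Fk k else 0).

Lemma memS d N j p : p <= 2 ^ j.+1 -> in_S d N p -> p \in codom (@Gf d N j.+2).
Proof.
move=> px [i [/andP[i1 id] [f [hf ep]]]].
have hf' : forall t, exists k : nat -> nat, f t = \prod_(m < N) m.+1 ^ k m.+1.
  move=> t; case: (hf t) => k ek; exists k; rewrite ek big_add1 /= big_mkord //.
case: (fin_all_exists hf') => kk hk.
have kb : forall t (m : 'I_N), 0 < m -> kk t m.+1 <= j.+1.
  move=> t m m0.
  have h1 : f t <= p by rewrite ep (bigD1 t) //= leq_addr.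
  have h2 : m.+1 ^ kk t m.+1 <= f t.
    rewrite hk (bigD1 m) //=; apply: leq_pmulr; apply: prodn_gt0 => r.
    by rewrite expn_gt0.
  have h3 : 2 ^ (kk t m.+1) <= m.+1 ^ (kk t m.+1).
    by case e: (kk t m.+1) => [|e'] //; rewrite leq_exp2r.
  rewrite -(@leq_exp2l 2) //.
  exact: leq_trans h3 (leq_trans h2 (leq_trans h1 px)).
apply/codomP.
exists [ffun t : 'I_d => if insub (val t) : option 'I_i is Some t'
        then Some [ffun m : 'I_N => (inord (kk t' m.+1) : 'I_j.+2)] else None].
pose F := fun n : nat => if insub n : option 'I_i is Some t' then f t' else 0.
have e1 : \sum_(t < i) f t = \sum_(t < i) F t.
  apply: eq_bigr => t _; rewrite /F; case: insubP => [t' _ /val_inj -> //|].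
  by rewrite ltn_ord.
rewrite ep e1 (big_ord_widen d F id) big_mkcond /Gf.
apply: eq_bigr => t _; rewrite ffunE /F.
case: insubP => [t' ti et|]; last by move/negbTE ->.
rewrite ti hk /Fk; apply: eq_bigr => m _; rewrite ffunE.
case: (posnP m) => m0.
  by rewrite m0 !exp1n.
by rewrite inordK // ltnS; apply: kb.
Qed.

Lemma card_dom d N E : #|{: {ffun 'I_d -> option {ffun 'I_N -> 'I_E}}}| = ((E ^ N).+1) ^ d.
Proof. by rewrite card_ffun card_option card_ffun !card_ord. Qed.

Lemma piN_bound d N M j :
  (forall p, p <= 2 ^ j.+1 -> prime p -> (p <= M) || (p \in codom (@Gf d N j.+2))) ->
  piN (2 ^ j.+1) <= M.+1 + ((j.+2 ^ N).+1) ^ d.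
Proof.
move=> h.
apply: (leq_trans (cnt_le (t := iota 0 M.+1 ++ codom (@Gf d N j.+2)) (iota_uniq _ _) _)).
  move=> p; rewrite mem_iota add0n ltnS => px pp.
  rewrite mem_cat mem_iota add0n ltnS; exact: h.
rewrite (size_cat (iota 0 M.+1)). rewrite size_iota size_codom card_dom //.

Qed.

Lemma sq_exp k : (k + 4) * (k + 4) <= 2 ^ (k + 4).
Proof.
elim: k => [|k IH] //.
rewrite addSn expnS; nia.
Qed.

Lemma exp_mono a b e : a <= b -> a ^ e <= b ^ e.
Proof. by move=> ab; elim: e => // e IH; rewrite !expnS leq_mul. Qed.

Lemma expo C K : exists j, C * (j.+2) ^ K < 2 ^ j.
Proof.
pose m := (C + K + 3) + 4.
have hm := sq_exp (C + K + 3); rewrite -/m in hm.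
exists (m * K.+1).
have h1 : (m * K.+1).+2 <= 2 ^ m by rewrite /m in hm *; nia.
have h2 : C < 2 ^ m by rewrite /m in hm *; nia.
have h3 := exp_mono K h1.
have h4 : 0 < (m * K.+1).+2 ^ K by rewrite expn_gt0.
rewrite expnM expnS.
set X := _ ^ K in h3 h4 *; set Y := _ ^ K in h3 *.
nia.
Qed.

Unset Implicit Arguments.

Theorem corollary6p11 (N d : nat) (hN : 1 <= N) (hd : 1 <= d) :
  forall M : nat, exists p : nat, M < p /\ prime p /\ ~ in_S d N p.
Proof.
move=> M.
case: (expo M.+2 (1 + N.+1 * d)) => j hj.
pose G := @Gf d N j.+2.
case hh: (has (fun p => [&& prime p, M < p & p \notin codom G]) (iota 0 (2 ^ j.+1).+1)).
  case/hasP: hh => p; rewrite mem_iota add0n ltnS => px /and3P[pp Mp nc].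
  exists p; split; [|split] => // hS.
  by move: nc; rewrite (memS px hS).
exfalso.
have hb : piN (2 ^ j.+1) <= M.+1 + ((j.+2 ^ N).+1) ^ d.
  apply: piN_bound => p px pp.
  move/hasPn: hh => /(_ p); rewrite mem_iota add0n ltnS px pp /= => /(_ isT).
  by rewrite negb_and negbK -leqNgt.
have hc := cheb (expn_gt0 2 j).
have e2 : (2 ^ j).*2 = 2 ^ j.+1 by rewrite -mul2n -expnS.
rewrite e2 -expnM leq_exp2l // in hc.
set P := piN _ in hb hc.
set B := _ ^ d in hb.
have hB1 : 0 < B by rewrite expn_gt0.
have hBY : B <= (j.+2) ^ (N.+1 * d).
  rewrite expnM; apply: exp_mono; rewrite expnS.
  have : 0 < j.+2 ^ N by rewrite expn_gt0.
  nia.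
rewrite add1n expnS in hj.
set Y := _ ^ (N.+1 * d) in hBY hj.
nia.
Qed.
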